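(* Let $G=(V,E,\omega)\in\mathcal G$, $\gamma\geq0$, $\tau>0$, and $M\geq0$. Let $J_\tau(u):=\langle\chi_V-u,e^{-\tau L}u\rangle_{\mathcal V}$, $v^0\in\mathcal V^{ab}_M$, and let $\{v^k\}_{k=1}^N\subset\mathcal V^{ab}_M$ ($N\in\mathbb N\cup\{\infty\}$) be a sequence generated by the mcOKMBO scheme. Then for all $k\in\{1,\dots,N\}$, $v^k\in\operatorname{argmin}_{v\in\mathcal K_M}dJ^{v^{k-1}}_\tau(v)$, where $dJ^u_\tau(v):=\langle\chi_V-2e^{-\tau L}u,v\rangle_{\mathcal V}$. Moreover, for all $k\in\{1,\dots,N\}$, $J_\tau(v^k)\leq J_\tau(v^{k-1})$ with equality if and only if $v^k=v^{k-1}$. Finally, there is $K\geq0$ such that $v^k=v^K$ for all $k\geq K$.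
   Context: $\mathcal{G}$ is the set of finite, simple, connected, undirected, edge-weighted graphs $G=(V,E,\omega)$ with $V=\{1,\dots,n\}$, $n\geq2$, weights $\omega_{ij}=\omega_{ji}>0$ on edges, $0$ otherwise. $d_i=\sum_j\omega_{ij}$. $\mathcal V$: functions $V\to\mathbb R$. Fixed $r\in[0,1]$: $\langle u,v\rangle_{\mathcal V}=\sum_id_i^ru_iv_i$, $(\Delta u)_i=d_i^{-r}\sum_j\omega_{ij}(u_i-u_j)$, $\mathcal M(u)=\sum_id_i^ru_i$, $\mathcal A(u)=\frac{\mathcal M(u)}{\sum_id_i^r}\chi_V$ ($\chi_S$ indicator of $S$). For $u\in\mathcal V$ let $\varphi$ be the unique solution of $\Delta\varphi=u-\mathcal A(u)$, $\mathcal M(\varphi)=0$, and $Lu:=\Delta u+\gamma\varphi$; $e^{-\tau L}$ its exponential. $\mathcal K_M$: $[0,1]$-valued $u\in\mathcal V$ with $\mathcal M(u)=M$. $\mathcal V^{ab}_M$: the set of $u\in\mathcal K_M$ for which there is $i\in V$ with $u_j\in\{0,1\}$ for all $j\neq i$. mcOKMBO scheme: for $k=1,\dots,N$, let $u=e^{-\tau L}v^{k-1}$ (the time-$\tau$ solution of $du/dt=-Lu$, $u(0)=v^{k-1}$); choose a bijection $R:V\to\{1,\dots,n\}$ such that $R(i)<R(j)$ implies $u_i\geq u_j$ (ties broken arbitrarily), and write $\ell_p:=R^{-1}(p)$; let $i^*$ be the largest index with $\sum_{p=1}^{i^*}d_{\ell_p}^r\leq M$; define $v^k_{\ell_p}=1$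 for $p\leq i^*$, $v^k_{\ell_{i^*+1}}=d_{\ell_{i^*+1}}^{-r}\big(M-\sum_{p=1}^{i^*}d_{\ell_p}^r\big)$, and $v^k_{\ell_p}=0$ for $p\geq i^*+2$. *)

(* Defs.v *)
From HB Require Import structures.
From mathcomp Require Import all_boot all_order all_algebra.
From mathcomp Require Import all_classical all_reals all_analysis.
Set Implicit Arguments. Unset Strict Implicit. Unset Printing Implicit Defensive.
Import Order.TTheory GRing.Theory Num.Theory.
Import numFieldNormedType.Exports.
Local Open Scope ring_scope.

Section Graph.
Variables (R : realType) (n : nat).
(* vertices are 'I_n (i.e. {0,...,n-1} for {1,...,n}); functions on V are 'I_n -> R *)
Variables (w : 'I_n -> 'I_n -> R) (r gamma : R).

Definition is_graph : Prop :=
  [/\ (2 <= n)%N,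
      (forall i j, w i j = w j i),
      (forall i j, 0 <= w i j),
      (forall i, w i i = 0) &
      (forall i j, connect [rel a b | 0 < w a b] i j)].

Definition deg (i : 'I_n) : R := \sum_j w i j.
Definition dr (i : 'I_n) : R := powR (deg i) r.

Definition ipV (u v : 'I_n -> R) : R := \sum_i dr i * u i * v i.
Definition Lap (u : 'I_n -> R) : 'I_n -> R :=
  fun i => (dr i)^-1 * \sum_j w i j * (u i - u j).
Definition mass (u : 'I_n -> R) : R := \sum_i dr i * u i.
Definition avg (u : 'I_n -> R) : 'I_n -> R :=
  fun _ => mass u / \sum_i dr i.

Definition phi (u : 'I_n -> R) : 'I_n -> R :=
  xget (fun _ => 0) [set p | Lap p = (fun i => u i - avg u i) /\ mass p = 0].

Definition Lop (u : 'I_n -> R) : 'I_n -> R :=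
  fun i => Lap u i + gamma * phi u i.

Definition expL (tau : R) (u : 'I_n -> R) : 'I_n -> R :=
  fun i => limn ((series (fun k : nat =>
              (- tau) ^+ k / (k`!)%:R * iter k Lop u i)) : R^nat).

Definition chiV : 'I_n -> R := fun _ => 1.

Definition Jtau (tau : R) (u : 'I_n -> R) : R :=
  ipV (fun i => chiV i - u i) (expL tau u).

Definition dJ (tau : R) (u v : 'I_n -> R) : R :=
  ipV (fun i => chiV i - 2 * expL tau u i) v.

Definition KM (M : R) (u : 'I_n -> R) : Prop :=
  (forall i, 0 <= u i <= 1) /\ mass u = M.

Definition VabM (M : R) (u : 'I_n -> R) : Prop :=
  KM M u /\ exists i, forall j, j != i -> u j = 0 \/ u j = 1.

(* One step of the mcOKMBO scheme: vnew is obtained from vold, with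
   positions p = 0..n-1 standing for 1..n, l p = R^{-1}(p+1). *)
Definition mcOKMBO_step (tau M : R) (vold vnew : 'I_n -> R) : Prop :=
  let u := expL tau vold in
  exists l : 'I_n -> 'I_n, bijective l /\
   (forall p q : 'I_n, (p < q)%N -> u (l q) <= u (l p)) /\
   let S := fun m : nat => \sum_(p < n | (p < m)%N) dr (l p) in
   exists istar : nat,
     [/\ (istar <= n)%N, S istar <= M,
         (forall j : nat, (istar < j <= n)%N -> M < S j) &
         (forall p : 'I_n,
            vnew (l p) =
              if (p < istar)%N then 1
              else if (p == istar :> nat) then (dr (l p))^-1 * (M - S istar)
              else 0)].

End Graph.

(* N in nat u {oo}: None stands for oo *)
Definition le_N (k : nat) (N : option nat) : bool :=
  if N is Some m then (k <= m)%N else true.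

(* Main.v *)
Require Import Defs.
From HB Require Import structures.
From mathcomp Require Import all_boot all_order all_algebra.
From mathcomp Require Import all_classical all_reals all_analysis.
From mathcomp Require Import ring lra zify.
Set Implicit Arguments. Unset Strict Implicit. Unset Printing Implicit Defensive.
Import Order.TTheory GRing.Theory Num.Theory.
Import numFieldNormedType.Exports.
Local Open Scope classical_set_scope.
Local Open Scope ring_scope.

Section Greedy.
Variables (R : realType) (n : nat).

Lemma greedy (d c v u : 'I_n -> R) (l : 'I_n -> 'I_n) (istar : nat) :
  (0 < n)%N -> (forall i, 0 <= d i) -> bijective l ->
  (forall p q : 'I_n, (p < q)%N -> c (l p) <= c (l q)) ->
  (forall p : 'I_n, (p < istar)%N -> v (l p) = 1) ->
  (forall p : 'I_n, (istar < p)%N -> v (l p) = 0) ->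
  (forall i, 0 <= u i <= 1) ->
  \sum_i d i * v i = \sum_i d i * u i ->
  \sum_i d i * c i * v i <= \sum_i d i * c i * u i.
Proof.
move=> n0 d0 bl cmon v1 v0 u01 mass.
rewrite -subr_le0 -sumrB.
have re : forall F : 'I_n -> R, \sum_i F i = \sum_p F (l p).
  by move=> F; rewrite (reindex l) //; apply: onW_bij.
pose a p := d (l p) * (v (l p) - u (l p)).
have sa : \sum_p a p = 0.
  rewrite /a; under eq_bigr do rewrite mulrBr.
  by rewrite sumrB -(re (fun i => d i * v i)) -(re (fun i => d i * u i)) mass subrr.
rewrite (re (fun i => d i * c i * v i - d i * c i * u i)).
have -> : \sum_p (d (l p) * c (l p) * v (l p) - d (l p) * c (l p) * u (l p))
   = \sum_p c (l p) * a p.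
  by apply: eq_bigr => p _; rewrite /a; ring.
have qlt : (minn istar n.-1 < n)%N.
  by rewrite (leq_ltn_trans (geq_minr _ _)) // ltn_predL.
pose q : 'I_n := Ordinal qlt.
have qv : (q : nat) = minn istar n.-1 by [].
have -> : \sum_p c (l p) * a p = \sum_p (c (l p) - c (l q)) * a p + c (l q) * \sum_p a p.
  by rewrite mulr_sumr -big_split /=; apply: eq_bigr => p _; ring.
rewrite sa mulr0 addr0; apply: sumr_le0 => p _.
have [pq|qp|/val_inj ->] := ltngtP p q; last by rewrite subrr mul0r.
- have pi : (p < istar)%N by apply: leq_trans pq _; rewrite qv geq_minl.
  rewrite mulr_le0_ge0 //; first by rewrite subr_le0 cmon.
  rewrite /a v1 // mulr_ge0 // subr_ge0; by case/andP: (u01 (l p)).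
- have pi : (istar < p)%N.
    move: qp; rewrite qv => qp.
    have h3 : (p < n)%N := ltn_ord p.
    lia.
  rewrite mulr_ge0_le0 //; first by rewrite subr_ge0 cmon.
  rewrite /a v0 // sub0r mulrN oppr_le0 mulr_ge0 //; by case/andP: (u01 (l p)).
Qed.
End Greedy.
Section Graph.
Variables (R : realType) (n : nat) (w : 'I_n -> 'I_n -> R) (r gamma : R).
Hypothesis Hg : is_graph w.


Let wsym : forall i j, w i j = w j i. Proof. by case: Hg. Qed.
Let wge0 : forall i j, 0 <= w i j. Proof. by case: Hg. Qed.
Let wcon : forall i j, connect [rel a b | 0 < w a b] i j. Proof. by case: Hg. Qed.
Let n2 : (2 <= n)%N. Proof. by case: Hg. Qed.

Lemma deg_gt0 i : 0 < deg w i.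
Proof.
have [j ji] : exists j : 'I_n, j != i.
  have h0 : (0 < n)%N by apply: leq_trans n2.
  have h1 : (1 < n)%N by [].
  case: (eqVneq i (Ordinal h0)) => e.
    by exists (Ordinal h1); rewrite e; apply/eqP => /(congr1 val).
  by exists (Ordinal h0); rewrite eq_sym.
have /connectP [p pp jl] := wcon i j.
case: p pp jl => [_ jl|x p /= /andP [wx _] _]; first by rewrite jl eqxx in ji.
rewrite /deg (bigD1 x) //= ltr_pwDl //; last by rewrite sumr_ge0.
Qed.

Lemma dr_gt0 i : 0 < dr w r i.
Proof. by rewrite /dr powR_gt0 // deg_gt0. Qed.

Definition Bf (u v : 'I_n -> R) := \sum_i \sum_j w i j * (u i - u j) * v i.
Definition Qf (u v : 'I_n -> R) := \sum_i \sum_j w i j * ((u i - u j) * (v i - v j)).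

Lemma Bf_Qf u v : Bf u v *+ 2 = Qf u v.
Proof.
rewrite mulr2n.
have E : Bf u v = \sum_i \sum_j w i j * (u i - u j) * - v j.
  rewrite /Bf exchange_big /=; apply: eq_bigr => i _; apply: eq_bigr => j _.
  by rewrite wsym mulrN -mulNr -mulrN opprB.
rewrite {2}E /Bf -big_split /=; apply: eq_bigr => i _.
by rewrite -big_split /=; apply: eq_bigr => j _; ring.
Qed.

Lemma Bf_sym u v : Bf u v = Bf v u.
Proof.
have : Bf u v *+ 2 = Bf v u *+ 2.
  rewrite !Bf_Qf /Qf.
  by apply: eq_bigr => i _; apply: eq_bigr => j _; rewrite [X in w i j * X]mulrC.
rewrite !mulr2n => h; lra.
Qed.

Lemma ipV_Lap u v : ipV w r (Lap w r u) v = Bf u v.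
Proof.
rewrite /ipV /Lap /Bf; apply: eq_bigr => i _.
rewrite mulrA mulfV ?mul1r; last by rewrite gt_eqF // dr_gt0.
by rewrite mulr_suml.
Qed.

Lemma Lap_sym u v : ipV w r (Lap w r u) v = ipV w r u (Lap w r v).
Proof.
rewrite ipV_Lap -[RHS]/(\sum_i _) .
transitivity (ipV w r (Lap w r v) u); last first.
  by apply: eq_bigr => i _; rewrite mulrAC.
by rewrite ipV_Lap Bf_sym.
Qed.

Lemma mass_ipV u : mass w r u = ipV w r u (@chiV R n).
Proof. by apply: eq_bigr => i _; rewrite /chiV mulr1. Qed.

Lemma Lap_chi : Lap w r (@chiV R n) = fun _ => 0.
Proof.
by apply/funext => i; rewrite /Lap /chiV big1 ?mulr0 // => j _; rewrite subrr mulr0.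
Qed.

Lemma mass_Lap u : mass w r (Lap w r u) = 0.
Proof.
rewrite mass_ipV Lap_sym Lap_chi /ipV big1 // => i _; by rewrite mulr0.
Qed.

Lemma Lap_ker u : Lap w r u = (fun _ => 0) -> forall i j, u i = u j.
Proof.
move=> L0.
have Q0 : Qf u u = 0.
  by rewrite -Bf_Qf -ipV_Lap L0 /ipV big1 ?mul0rn // => i _; rewrite mulr0 mul0r.
have edge : forall a b, 0 < w a b -> u a = u b.
  move=> a b wab.
  have tge0 : forall i j, 0 <= w i j * ((u i - u j) * (u i - u j)).
    by move=> i j; rewrite mulr_ge0 // -expr2 sqr_ge0.
  move/eqP: Q0; rewrite psumr_eq0; last by move=> i _; rewrite sumr_ge0.
  move/allP/(_ a (mem_index_enum _)) => /=; rewrite psumr_eq0 //.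
  move/allP/(_ b (mem_index_enum _)) => /=; rewrite mulf_eq0 gt_eqF //=.
  by rewrite mulf_eq0 orbb subr_eq0 => /eqP.
move=> i j; have /connectP [p pp ->] := wcon i j.
elim: p i pp => [//|x p IH] i /= /andP [wx pp].
by rewrite (edge _ _ wx) IH.
Qed.



Definition linF (F : ('I_n -> R) -> ('I_n -> R)) :=
  forall a u v, F (fun x => a * u x + v x) = fun x => a * F u x + F v x.

Definition delta (i : 'I_n) : 'I_n -> R := fun j => (i == j)%:R.

Lemma linF0 F : linF F -> F (fun _ => 0) = fun _ => 0.
Proof.
move=> L; have := L (-1) (fun _ => 0) (fun _ => 0).
have -> : (fun x : 'I_n => -1 * (fun _ : 'I_n => 0 : R) x + (fun _ => 0) x) = fun _ => 0.
  by apply/funext => x; rewrite mulr0 addr0.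
move=> h; apply/funext => x; have := congr1 (fun f => f x) h => /= ->.
by rewrite mulN1r addNr.
Qed.

Lemma linF_scale F a u : linF F -> F (fun x => a * u x) = fun x => a * F u x.
Proof.
move=> L; have := L a u (fun _ => 0); rewrite linF0 //.
have -> : (fun x => a * u x + (fun _ : 'I_n => 0 : R) x) = fun x => a * u x.
  by apply/funext => x; rewrite addr0.
by move=> ->; apply/funext => x; rewrite addr0.
Qed.

Lemma linF_sum F (I : Type) (s : seq I) (g : I -> 'I_n -> R) : linF F ->
  F (fun x => \sum_(i <- s) g i x) = fun y => \sum_(i <- s) F (g i) y.
Proof.
move=> L; elim: s => [|a s IH].
  under eq_fun do rewrite big_nil; rewrite linF0 //.
  by apply/funext => y; rewrite big_nil.
under eq_fun do rewrite big_cons.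
have := L 1 (g a) (fun x => \sum_(i <- s) g i x).
under eq_fun do rewrite mul1r.
move=> ->; rewrite IH; apply/funext => y; by rewrite big_cons mul1r.
Qed.

Lemma linF_mat F u : linF F -> F u = fun j => \sum_i u i * F (delta i) j.
Proof.
move=> L.
have -> : u = fun x => \sum_i u i * delta i x.
  apply/funext => x; rewrite (bigD1 x) //= big1 /delta ?eqxx ?mulr1 ?addr0 //.
  by move=> i /negPf ->; rewrite mulr0.
rewrite (linF_sum _ (fun i x => u i * delta i x)) //; apply/funext => j.
apply: eq_bigr => i _; rewrite linF_scale //.
by congr (_ * _); rewrite (bigD1 i) //= big1 /delta ?eqxx ?mulr1 ?addr0 // => k /negPf;
  rewrite eq_sym => ->; rewrite mulr0.
Qed.

Lemma Lap_lin : linF (Lap w r).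
Proof.
move=> a u v; apply/funext => i; rewrite /Lap mulrCA -mulrDr; congr (_ * _).
by rewrite mulr_sumr -big_split; apply: eq_bigr => j _ /=; ring.
Qed.

Lemma mass_lin a u v : mass w r (fun x => a * u x + v x) = a * mass w r u + mass w r v.
Proof.
by rewrite /mass mulr_sumr -big_split; apply: eq_bigr => j _ /=; ring.
Qed.

Lemma mass_cst c : mass w r (fun _ => c) = c * \sum_i dr w r i.
Proof. by rewrite /mass mulr_sumr; apply: eq_bigr => i _; rewrite mulrC. Qed.

Lemma sumdr_gt0 : 0 < \sum_i dr w r i.
Proof.
have h0 : (0 < n)%N by case: Hg => h *; apply: leq_trans h.
rewrite (bigD1 (Ordinal h0)) //= ltr_pwDl ?dr_gt0 // sumr_ge0 // => i _.
by rewrite ltW // dr_gt0.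
Qed.

Definition Top u := fun j => Lap w r u j + mass w r u.

Lemma Top_lin : linF Top.
Proof.
move=> a u v; apply/funext => j; rewrite /Top Lap_lin mass_lin; ring.
Qed.

Lemma mass_Top u : mass w r (Top u) = mass w r u * \sum_i dr w r i.
Proof.
have -> : Top u = fun j => 1 * Lap w r u j + (fun _ => mass w r u) j.
  by apply/funext => j; rewrite mul1r.
by rewrite mass_lin mass_Lap // mul1r add0r mass_cst.
Qed.

Lemma Top_inj u : Top u = (fun _ => 0) -> u = (fun _ => 0).
Proof.
move=> T0.
have m0 : mass w r u = 0.
  have := mass_Top u; rewrite T0 mass_cst mul0r => /esym /eqP.
  by rewrite mulf_eq0 (gt_eqF sumdr_gt0) orbF => /eqP.
have L0 : Lap w r u = fun _ => 0.
  apply/funext => j; have := congr1 (fun f => f j) T0; rewrite /Top m0 addr0 => ->.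
  by [].
have K := Lap_ker L0.
apply/funext => i; move: m0.
have -> : u = fun _ => u i by apply/funext => j; rewrite (K j i).
rewrite mass_cst => /eqP; rewrite mulf_eq0 (gt_eqF sumdr_gt0) orbF => /eqP ->.
by [].
Qed.

Lemma Top_surj f : exists u, Top u = f.
Proof.
pose A : 'M[R]_n := \matrix_(i, j) Top (delta i) j.
have AE : forall x : 'rV[R]_n, x *m A = \row_j Top (fun i => x 0 i) j.
  move=> x; apply/rowP => j; rewrite !mxE (linF_mat _ Top_lin) /=.
  by apply: eq_bigr => i _; rewrite mxE.
have Au : A \in unitmx.
  rewrite -row_free_unit; apply: inj_row_free => x.
  rewrite AE => /rowP h.
  have : (fun i => x 0 i) = fun _ => 0.
    by apply: Top_inj; apply/funext => j; have := h j; rewrite !mxE.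
  move=> h2; apply/rowP => i; rewrite mxE.
  exact: (congr1 (fun g => g i) h2).
pose y : 'rV[R]_n := \row_j f j.
exists (fun i => (y *m invmx A) 0 i).
apply/funext => j; have := mulmxKV Au y.
move=> /(congr1 (fun M : 'rV[R]_n => M 0 j)).
by rewrite AE !mxE.
Qed.

Lemma phi_spec u : Lap w r (phi w r u) = (fun i => u i - avg w r u i) /\ mass w r (phi w r u) = 0.
Proof.
suff H : exists p : 'I_n -> R, Lap w r p = (fun i => u i - avg w r u i) /\ mass w r p = 0.
  exact: (@xgetPex _ (fun _ => 0) [set p | Lap w r p = (fun i => u i - avg w r u i) /\ mass w r p = 0] H).
have [p Tp] := Top_surj (fun i => u i - avg w r u i).
have mf : mass w r (fun i => u i - avg w r u i) = 0.
  have -> : (fun i => u i - avg w r u i) = fun i => 1 * u i + (fun _ => - (mass w r u / \sum_i dr w r i)) i.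
    by apply/funext => i; rewrite mul1r.
  rewrite mass_lin mass_cst mul1r mulNr divfK ?subrr //.
  by rewrite gt_eqF // sumdr_gt0.
have mp : mass w r p = 0.
  have := mass_Top p; rewrite Tp mf => /esym /eqP.
  by rewrite mulf_eq0 (gt_eqF sumdr_gt0) orbF => /eqP.
exists p; split => //; rewrite -Tp; apply/funext => j; by rewrite /Top mp addr0.
Qed.



Lemma ipV_sym x y : ipV w r x y = ipV w r y x.
Proof. by apply: eq_bigr => i _; rewrite mulrAC. Qed.

Lemma ipV_lin2 x a y z : ipV w r x (fun i => a * y i + z i) = a * ipV w r x y + ipV w r x z.
Proof. by rewrite /ipV mulr_sumr -big_split; apply: eq_bigr => i _ /=; ring. Qed.

Lemma ipV_scale2 x a y : ipV w r x (fun i => a * y i) = a * ipV w r x y.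
Proof. by rewrite /ipV mulr_sumr; apply: eq_bigr => i _ /=; ring. Qed.

Lemma ipV_cst x c : ipV w r x (fun _ => c) = c * mass w r x.
Proof. by rewrite /ipV /mass mulr_sumr; apply: eq_bigr => i _ /=; ring. Qed.

Lemma phi_unique u p : Lap w r p = (fun i => u i - avg w r u i) -> mass w r p = 0 ->
  p = phi w r u.
Proof.
move=> L m; have [L' m'] := phi_spec u.
have : Top (fun x => -1 * phi w r u x + p x) = fun _ => 0.
  rewrite /Top Lap_lin mass_lin L L' m m' mulr0 addr0; apply/funext => j; ring.
move/Top_inj => h; apply/funext => x; have := congr1 (fun f => f x) h => /=.
lra.
Qed.

Lemma avg_lin a u v i : avg w r (fun x => a * u x + v x) i = a * avg w r u i + avg w r v i.
Proof. by rewrite /avg mass_lin mulrDl mulrA. Qed.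

Lemma phi_lin : linF (phi w r).
Proof.
move=> a u v; apply/esym/phi_unique.
  have [L1 _] := phi_spec u; have [L2 _] := phi_spec v.
  rewrite Lap_lin L1 L2; apply/funext => i; rewrite avg_lin; ring.
have [_ m1] := phi_spec u; have [_ m2] := phi_spec v.
by rewrite mass_lin m1 m2 mulr0 addr0.
Qed.

Lemma phi_sym u v : ipV w r (phi w r u) v = ipV w r u (phi w r v).
Proof.
have [L1 m1] := phi_spec u; have [L2 m2] := phi_spec v.
have ev : v = fun i => 1 * Lap w r (phi w r v) i + (fun _ => mass w r v / \sum_j dr w r j) i.
  by apply/funext => i; rewrite L2 mul1r /avg subrK.
have eu : u = fun i => 1 * Lap w r (phi w r u) i + (fun _ => mass w r u / \sum_j dr w r j) i.
  by apply/funext => i; rewrite L1 mul1r /avg subrK.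
rewrite {1}ev ipV_lin2 ipV_cst m1 mulr0 addr0 mul1r.
rewrite -Lap_sym L1 ipV_sym [RHS]ipV_sym.
have -> : (fun i => u i - avg w r u i) = fun i => 1 * u i + (fun _ => - (mass w r u / \sum_j dr w r j)) i.
  by apply/funext => i; rewrite mul1r.
by rewrite ipV_lin2 ipV_cst m2 mulr0 addr0 mul1r.
Qed.

Lemma Lop_lin : linF (Lop w r gamma).
Proof.
move=> a u v; apply/funext => i; rewrite /Lop Lap_lin phi_lin; ring.
Qed.

Lemma Lop_sym u v : ipV w r (Lop w r gamma u) v = ipV w r u (Lop w r gamma v).
Proof.
have eL : forall x, Lop w r gamma x = fun i => 1 * Lap w r x i + gamma * phi w r x i.
  by move=> x; apply/funext => i; rewrite mul1r.
rewrite ipV_sym !eL !ipV_lin2 !ipV_scale2 !mul1r; congr (_ + _ * _).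
  by rewrite ipV_sym Lap_sym.
by rewrite ipV_sym phi_sym.
Qed.

Lemma mass_Lop u : mass w r (Lop w r gamma u) = 0.
Proof.
have -> : Lop w r gamma u = fun i => gamma * phi w r u i + Lap w r u i.
  by apply/funext => i; rewrite /Lop addrC.
by rewrite mass_lin mass_Lap //; have [_ ->] := phi_spec u; rewrite mulr0 addr0.
Qed.

End Graph.
Section Expo.
Variables (R : realType) (n : nat) (d : 'I_n -> R) (F : ('I_n -> R) -> 'I_n -> R).
Hypothesis dpos : forall i, 0 < d i.
Hypothesis Flin : linF F.
Hypothesis Fsym : forall u v, \sum_i d i * F u i * v i = \sum_i d i * u i * F v i.

Definition cf (u : 'I_n -> R) i k := iter k F u i / k`!%:R.
Definition E t u i := limn (pseries (cf u i) t).
Definition nrm (u : 'I_n -> R) := \sum_i `|u i|.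

Lemma iter_lin k : linF (iter k F).
Proof. by elim: k => [|k IH] a u v //=; rewrite IH Flin. Qed.

Lemma Fbound : exists C, 0 <= C /\ forall u, nrm (F u) <= C * nrm u.
Proof.
pose C := \sum_i \sum_j `|F (delta R i) j|.
exists C; split; first by rewrite sumr_ge0 // => i _; rewrite sumr_ge0.
move=> u; rewrite /nrm (linF_mat u Flin).
apply: (@le_trans _ _ (\sum_j \sum_i `|u i| * `|F (delta R i) j|)).
  apply: ler_sum => j _; apply: le_trans (ler_norm_sum _ _ _) _.
  by apply: ler_sum => i _; rewrite normrM.
rewrite exchange_big /= mulr_sumr; apply: ler_sum => i _.
rewrite -mulr_sumr mulrC ler_wpM2r //.
rewrite /C [leRHS](bigD1 i) //= lerDl sumr_ge0 // => k _; exact: sumr_ge0.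
Qed.

Lemma norm_le_nrm u i : `|u i| <= nrm u.
Proof. by rewrite /nrm (bigD1 i) //= lerDl sumr_ge0. Qed.

Lemma iter_bound : exists C, 0 <= C /\ forall u k i, `|iter k F u i| <= C ^+ k * nrm u.
Proof.
have [C [C0 HC]] := Fbound; exists C; split => // u k i.
apply: le_trans (norm_le_nrm _ i) _.
elim: k => [|k IH] /=; first by rewrite expr0 mul1r.
by apply: le_trans (HC _) _; rewrite exprS -mulrA ler_wpM2l.
Qed.

Lemma cf_cvg u i t : cvgn (pseries (cf u i) t).
Proof.
have [C [C0 HC]] := iter_bound.
apply: normed_cvg.
apply: (@series_le_cvg _ _ (nrm u *: exp_coeff (C * `|t|))).
- by move=> k /=.
- by move=> k; apply: mulr_ge0; [apply: sumr_ge0 => * | apply: exp_coeff_ge0; apply: mulr_ge0].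
- move=> k /=; rewrite /cf /exp_coeff /= !normrM normfV normrX.
  have -> : (nrm u *: (fun n0 : nat => (C * `|t|) ^+ n0 / n0`!%:R)) k = nrm u * ((C * `|t|) ^+ k / k`!%:R) by [].
  rewrite [`|k`!%:R|]ger0_norm // exprMn.
  have -> : `|iter k F u i| / k`!%:R * `|t| ^+ k = (`|iter k F u i| * `|t| ^+ k) / k`!%:R.
    by rewrite mulrAC.
  have -> : nrm u * (C ^+ k * `|t| ^+ k / k`!%:R) = (C ^+ k * nrm u * `|t| ^+ k) / k`!%:R.
    by rewrite !mulrA [nrm u * _]mulrC.
  by rewrite ler_wpM2r // ler_wpM2r // HC.
- exact/is_cvg_seriesZ/is_cvg_series_exp_coeff.
Qed.


Lemma cf_diffs u i : pseries_diffs (cf u i) = cf (F u) i.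
Proof.
apply/funext => k; rewrite /pseries_diffs /cf iterSr /= factS natrM invfM.
rewrite mulrCA; congr (_ * _); rewrite mulrA mulfV ?mul1r //.
Qed.

Lemma E_derive u i t : is_derive t (1 : R) (fun s => E s u i) (E t (F u) i).
Proof.
rewrite /E -cf_diffs.
apply: (@pseries_snd_diffs _ _ (`|t| + 1)).
- exact: cf_cvg.
- rewrite cf_diffs; exact: cf_cvg.
- rewrite !cf_diffs; exact: cf_cvg.
- by rewrite (@ger0_norm _ (`|t| + 1)) ?ltrDl // addr_ge0.
Qed.

Lemma cvg_fin_sum (I : Type) (s : seq I) (p : I -> nat -> R) (l a : I -> R) :
  (forall i, p i @ \oo --> l i) ->
  (fun N => \sum_(i <- s) a i * p i N) @ \oo --> \sum_(i <- s) a i * l i.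
Proof.
move=> H; elim: s => [|x s IH].
  rewrite big_nil; under eq_fun do rewrite big_nil; exact: cvg_cst.
rewrite big_cons; under eq_fun do rewrite big_cons.
apply: (@cvgD _ _ _ _ _ (fun N => a x * p x N) (fun N => \sum_(i <- s) a i * p i N)) => //.
exact: cvgMl_tmp.
Qed.

Lemma E_sum (a : 'I_n -> R) (g : nat -> R) u t :
  (forall k, g k = \sum_i a i * cf u i k) ->
  \sum_i a i * E t u i = limn (pseries g t).
Proof.
move=> Hg; apply/esym/cvg_lim => //.
have -> : pseries g t = fun N => \sum_i a i * pseries (cf u i) t N.
  apply/funext => N; rewrite /pseries /series /=.
  under eq_bigr do rewrite Hg mulr_suml.
  rewrite exchange_big /=; apply: eq_bigr => i _.
  by rewrite mulr_sumr; apply: eq_bigr => k _; rewrite mulrA.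
apply: (@cvg_fin_sum _ _ (fun i => pseries (cf u i) t)) => i; exact: cf_cvg.
Qed.

Lemma E_lin t a u v i : E t (fun x => a * u x + v x) i = a * E t u i + E t v i.
Proof.
apply/cvg_lim => //.
have -> : pseries (cf (fun x => a * u x + v x) i) t =
   fun N => a * pseries (cf u i) t N + pseries (cf v i) t N.
  apply/funext => N; rewrite /pseries /series /= mulr_sumr -big_split /=.
  apply: eq_bigr => k _; rewrite /cf iter_lin; ring.
apply: (@cvgD _ _ _ _ _ (fun N => a * pseries (cf u i) t N) (pseries (cf v i) t)).
  apply: cvgMl_tmp; exact: cf_cvg.
exact: cf_cvg.
Qed.

Lemma E_comm t u j : E t (F u) j = F (E t u) j.
Proof.
rewrite (linF_mat (E t u) Flin).
under [RHS]eq_bigr do rewrite mulrC.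
rewrite (@E_sum (fun i => F (delta R i) j) (cf (F u) j)) //.
move=> k; rewrite /cf -iterSr /= (linF_mat _ Flin) mulr_suml.
by apply: eq_bigr => i _; rewrite mulrCA mulrA.
Qed.

Definition ip (x y : 'I_n -> R) := \sum_i d i * x i * y i.

Lemma iter_sym k u v : ip (iter k F u) v = ip u (iter k F v).
Proof.
elim: k v => [//|k IH] v.
by rewrite /= /ip Fsym -/(ip _ _) IH -iterSr.
Qed.

Lemma E_sym t u v : ip (E t u) v = ip u (E t v).
Proof.
pose g k := ip (iter k F u) v / k`!%:R.
transitivity (limn (pseries g t)).
  rewrite /ip; under eq_bigr do rewrite mulrAC.
  apply: E_sum => k; rewrite /g /ip mulr_suml; apply: eq_bigr => i _.
  by rewrite /cf; ring.
rewrite /ip; symmetry.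
apply: E_sum => k; rewrite /g iter_sym /ip mulr_suml; apply: eq_bigr => i _.
by rewrite /cf; ring.
Qed.

Lemma lim_series_fin (f : nat -> R) : (forall k, (0 < k)%N -> f k = 0) ->
  limn (series f) = f 0%N.
Proof.
move=> H; apply/cvg_lim => //; rewrite -cvg_shiftS.
have -> : [sequence series f n.+1]_n = fun _ => f 0%N.
  apply/funext => N; rewrite /series /= big_nat_recl // big1_seq ?addr0 // => k _.
  by apply: H.
exact: cvg_cst.
Qed.

Lemma E0 u : E 0 u = u.
Proof.
apply/funext => i; rewrite /E /pseries lim_series_fin /cf /= ?expr0 ?mulr1 ?divr1 //.
by move=> [//|k] _; rewrite expr0n mulr0.
Qed.

Lemma E_mass t u : (forall x, \sum_i d i * F x i = 0) ->
  \sum_i d i * E t u i = \sum_i d i * u i.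
Proof.
move=> Fm; rewrite (@E_sum d (fun k => \sum_i d i * cf u i k)) //.
rewrite /pseries lim_series_fin /= ?expr0 ?mulr1 /cf /=.
  by apply: eq_bigr => i _; rewrite fact0 divr1.
move=> [//|k] _; rewrite /cf /=.
under eq_bigr do rewrite mulrA.
by rewrite -mulr_suml Fm !mul0r.
Qed.


Lemma derive_neg u i s : is_derive s (1 : R) (fun s => E (- s) u i) (- E (- s) (F u) i).
Proof.
have h1 : is_derive (- s) (1 : R) (fun s => E s u i) (E (- s) (F u) i) by exact: E_derive.
have h2 : is_derive s (1 : R) -%R (- 1) by exact: is_deriveNid.
have := is_derive1_comp h1 h2; rewrite mulrN1; exact.
Qed.

Lemma derive_shift u i c s : is_derive s (1 : R) (fun s => E (s + c) u i) (E (s + c) (F u) i).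
Proof.
have h1 : is_derive (shift c s) (1 : R) (fun s => E s u i) (E (s + c) (F u) i) by exact: E_derive.
have h2 : is_derive s (1 : R) (shift c) 1 by exact: is_derive_shift.
have := is_derive1_comp h1 h2; rewrite mulr1; exact.
Qed.

Definition Phi x c s := \sum_i d i * (E (- s) x i * E (s + c) x i).

Lemma Phi_cst x c s : Phi x c s = Phi x c 0.
Proof.
apply: is_derive_0_is_cst => {}s.
have E1 : Phi x c = \sum_(i < n) (d i \*: ((fun s => E (- s) x i) * (fun s => E (s + c) x i))).
  by rewrite fct_sumE; apply/funext => y /=; apply: eq_bigr.
rewrite E1; apply: is_derive_eq.
  apply: is_derive_sum => i; apply: is_deriveZ; apply: is_deriveM.
    exact: derive_neg.
  exact: derive_shift.
rewrite /=.
have -> : \sum_(i < n) d i *: (E (- s) x i *: E (s + c) (F x) i + E (s + c) x i *: - E (- s) (F x) i)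
   = ip (E (- s) x) (E (s + c) (F x)) - ip (E (- s) (F x)) (E (s + c) x).
  rewrite /ip -sumrB; apply: eq_bigr => i _; rewrite /GRing.scale /=; ring.
have -> : E (s + c) (F x) = F (E (s + c) x) by apply/funext => j; rewrite E_comm.
have -> : E (- s) (F x) = F (E (- s) x) by apply/funext => j; rewrite E_comm.
by rewrite /ip Fsym subrr.
Qed.

Lemma ip_pos y : (exists i, y i != 0) -> 0 < ip y y.
Proof.
have sq : forall a : R, 0 <= a * a by move=> a; rewrite -expr2 sqr_ge0.
move=> [j yj]; rewrite lt_def; apply/andP; split; last first.
  rewrite /ip; apply: sumr_ge0 => i _; rewrite -mulrA; exact: mulr_ge0 (ltW (dpos i)) (sq _).
rewrite /ip; apply/negP => /eqP /psumr_eq0P h.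
have : d j * y j * y j = 0 by apply: h => // i _; rewrite -mulrA; exact: mulr_ge0 (ltW (dpos i)) (sq _).
by move/eqP; rewrite !mulf_eq0 (negPf yj) gt_eqF.
Qed.

Lemma E_pd c x : x <> (fun _ => 0) -> 0 < ip x (E c x).
Proof.
move=> x0.
have ex : exists i, x i != 0.
  apply/not_existsP => h; apply: x0; apply/funext => i.
  by have /negP := h i; rewrite negbK => /eqP.
have P1 := Phi_cst x c (- (c / 2)).
have P0 := Phi_cst x 0 (- (c / 2)).
have e1 : ip x (E c x) = \sum_i d i * (x i * E c x i).
  by rewrite /ip; apply: eq_bigr => i _; rewrite mulrA.
have hc : - (c / 2) + c = c / 2 by rewrite {2}(splitr c) addrA addNr add0r.
move: P1 P0; rewrite /Phi opprK hc ?addr0 ?add0r !oppr0 ?addr0 E0 => P1 P0.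
rewrite e1 -P1.
have -> : \sum_i d i * (E (c / 2) x i * E (c / 2) x i) = ip (E (c / 2) x) (E (c / 2) x).
  by apply: eq_bigr => i _; rewrite mulrA.
apply: ip_pos.
apply/not_existsP => h.
have : ip x x = 0.
  rewrite /ip; under eq_bigr do rewrite -mulrA.
  rewrite -P0; apply: big1 => i _.
  by have /negP := h i; rewrite negbK => /eqP ->; rewrite mul0r mulr0.
by move/eqP; rewrite gt_eqF // ip_pos.
Qed.

End Expo.
Section Main.
Variables (R : realType) (n : nat) (w : 'I_n -> 'I_n -> R) (r gamma tau M : R).
Hypothesis Hg : is_graph w.

Let F := Lop w r gamma.
Let d := dr w r.
Let Flin : linF F := Lop_lin r gamma Hg.
Let Fsym : forall u v, \sum_i d i * F u i * v i = \sum_i d i * u i * F v i :=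
  Lop_sym r gamma Hg.
Let dpos : forall i, 0 < d i := dr_gt0 r Hg.
Let Fm : forall x, \sum_i d i * F x i = 0 := mass_Lop r gamma Hg.

Lemma expL_E u : expL w r gamma tau u = E F (- tau) u.
Proof.
apply/funext => i; rewrite /expL /E /pseries; congr (limn (series _)).
apply/funext => k /=; rewrite /cf /F; ring.
Qed.

Let e u := expL w r gamma tau u.

Lemma mass_e u : mass w r (e u) = mass w r u.
Proof. by rewrite /e expL_E; apply: (E_mass Flin). Qed.

Lemma e_lin u v i : e (fun x => v x - u x) i = e v i - e u i.
Proof.
rewrite /e expL_E.
have -> : (fun x => v x - u x) = fun x => -1 * u x + v x.
  by apply/funext => x; rewrite mulN1r addrC.
by rewrite !expL_E (E_lin Flin) mulN1r addrC.
Qed.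

Lemma e_sym u v : ipV w r (e u) v = ipV w r u (e v).
Proof. by rewrite /e !expL_E; apply: (E_sym Flin Fsym). Qed.

Lemma e_pd x : x <> (fun _ => 0) -> 0 < ipV w r x (e x).
Proof. by move=> hx; rewrite /e expL_E; apply: (E_pd dpos Flin Fsym). Qed.

Lemma J_eq x : mass w r x = M -> Jtau w r gamma tau x = M - ipV w r x (e x).
Proof.
move=> mx; rewrite /Jtau -mx -(mass_e x) /ipV /mass -sumrB.
by apply: eq_bigr => i _; rewrite /chiV /e; ring.
Qed.

Lemma dJ_eq u y : mass w r y = M -> dJ w r gamma tau u y = M - 2 * ipV w r (e u) y.
Proof.
move=> my; rewrite /dJ -my /ipV /mass mulr_sumr -sumrB.
by apply: eq_bigr => i _; rewrite /chiV /e; ring.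
Qed.

Lemma Q_eq u v : ipV w r (fun x => v x - u x) (e (fun x => v x - u x)) =
  ipV w r v (e v) - 2 * ipV w r (e u) v + ipV w r u (e u).
Proof.
have h1 : ipV w r u (e v) = ipV w r (e u) v by rewrite e_sym.
have h2 : ipV w r v (e u) = ipV w r (e u) v by apply: eq_bigr => i _; rewrite mulrAC.
have -> : 2 * ipV w r (e u) v = ipV w r u (e v) + ipV w r v (e u) by rewrite h1 h2; ring.
transitivity (\sum_i (d i * v i * e v i - (d i * u i * e v i + d i * v i * e u i) + d i * u i * e u i)).
  by apply: eq_bigr => i _; rewrite e_lin /d; ring.
by rewrite big_split sumrB big_split.
Qed.

Lemma J_step u v : KM w r M u -> KM w r M v ->
  dJ w r gamma tau u v <= dJ w r gamma tau u u ->
  Jtau w r gamma tau v <= Jtau w r gamma tau u /\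
  (Jtau w r gamma tau v = Jtau w r gamma tau u <-> v = u).
Proof.
move=> [_ mu] [_ mv]; rewrite !dJ_eq // !J_eq // => hd.
have hu : ipV w r (e u) u = ipV w r u (e u) by apply: eq_bigr => i _; rewrite mulrAC.
rewrite hu in hd.
have Q0 : 0 <= ipV w r (fun x => v x - u x) (e (fun x => v x - u x)).
  case: (pselect ((fun x => v x - u x) = (fun _ => 0))) => [->|h].
    by rewrite /ipV big1 // => i _; rewrite mulr0 mul0r.
  exact/ltW/e_pd.
rewrite Q_eq in Q0.
split; first by lra.
split; last by move=> ->.
move=> hJ.
case: (pselect ((fun x => v x - u x) = (fun _ => 0))) => [h|h].
  apply/funext => x; have := congr1 (fun f => f x) h => /=; lra.
have := e_pd h; rewrite Q_eq => hq; exfalso; lra.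
Qed.

End Main.
Section Final.
Variables (R : realType) (n : nat) (w : 'I_n -> 'I_n -> R) (r gamma tau M : R).
Variables (N : option nat) (v : nat -> 'I_n -> R).
Hypothesis Hg : is_graph w.
Hypothesis Hv0 : VabM w r M (v 0%N).
Hypothesis Hvk : forall k : nat, (1 <= k)%N -> le_N k N -> VabM w r M (v k).
Hypothesis Hstep : forall k : nat, (1 <= k)%N -> le_N k N ->
     mcOKMBO_step w r gamma tau M (v k.-1) (v k).

Lemma le_N_mono j k : (j <= k)%N -> le_N k N -> le_N j N.
Proof. by case: N => //= m jk km; apply: leq_trans jk km. Qed.

Lemma KM_prev k : (1 <= k)%N -> le_N k N -> KM w r M (v k.-1).
Proof.
case: k => [//|[|k]] _ hk; first by case: Hv0.
by case: (Hvk (isT : (1 <= k.+1)%N) (le_N_mono (leqnSn _) hk)).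
Qed.

Lemma part1 k : (1 <= k)%N -> le_N k N ->
  KM w r M (v k) /\
  (forall u, KM w r M u -> dJ w r gamma tau (v k.-1) (v k) <= dJ w r gamma tau (v k.-1) u).
Proof.
move=> k1 hk; have [Kk _] := Hvk k1 hk; split => // u [u01 mu].
have [l [bl [lord [istar [ist _ _ form]]]]] := Hstep k1 hk.
have n0 : (0 < n)%N by case: Hg => h *; apply: leq_trans h.
rewrite /dJ /ipV.
apply: (@greedy _ _ _ _ _ _ l istar n0) => //.
- by move=> i; apply/ltW/dr_gt0.
- by move=> p q pq; have := lord p q pq; rewrite /chiV; lra.
- by move=> p pi; rewrite form pi.
- move=> p ip; rewrite form ltnNge (ltnW ip) /=.
  by rewrite (gtn_eqF ip).
- by case: Kk => _ mk; rewrite -/(mass w r (v k)) -/(mass w r u) mk mu.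
Qed.

Lemma part2 k : (1 <= k)%N -> le_N k N ->
  Jtau w r gamma tau (v k) <= Jtau w r gamma tau (v k.-1) /\
  (Jtau w r gamma tau (v k) = Jtau w r gamma tau (v k.-1) <-> v k = v k.-1).
Proof.
move=> k1 hk; have [Kk opt] := part1 k1 hk.
exact: (J_step Hg (KM_prev k1 hk) Kk (opt _ (KM_prev k1 hk))).
Qed.

Definition Fv (f : {ffun 'I_n -> 'I_n}) (m : 'I_n.+1) : 'I_n -> R := fun x =>
  \sum_(p < n | f p == x)
    (if (p < m)%N then 1
     else if (p == m :> nat) then (dr w r (f p))^-1 * (M - \sum_(q < n | (q < m)%N) dr w r (f q))
     else 0).

Lemma vk_Fv k : (1 <= k)%N -> le_N k N -> exists t, v k = Fv t.1 t.2.
Proof.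
move=> k1 hk.
have [l [bl [lord [istar [ist _ _ form]]]]] := Hstep k1 hk.
have istn : (istar < n.+1)%N by [].
exists (finfun l, Ordinal istn); apply/funext => x /=.
have [g lg gl] := bl.
rewrite /Fv (bigD1 (g x)) /=; last by rewrite ffunE gl.
rewrite [\sum_(i < n | _ && _) _]big1 ?addr0; last first.
  move=> p /andP [/eqP lp /negP pg]; exfalso; apply: pg; apply/eqP.
  by rewrite -lp ffunE lg.
rewrite !ffunE -{1}(gl x) form gl.
by congr (if _ then _ else _); under eq_bigr do rewrite ffunE.
Qed.

Lemma part3 : exists K : nat, le_N K N /\ forall k : nat, (K <= k)%N -> le_N k N -> v k = v K.
Proof.
case: (pselect (exists k, (1 <= k)%N /\ le_N k N)) => [[k0 [k01 hk0]]|nok]; last first.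
  exists 0%N; split; first by case: N nok => // m nok.
  move=> [//|k] _ hk; exfalso; apply: nok; by exists k.+1.
pose P := fun t : {ffun 'I_n -> 'I_n} * 'I_n.+1 =>
  `[< exists k, [/\ (1 <= k)%N, le_N k N & v k = Fv t.1 t.2] >].
pose J := fun t : {ffun 'I_n -> 'I_n} * 'I_n.+1 => Jtau w r gamma tau (Fv t.1 t.2).
have [t0 ht0] := vk_Fv k01 hk0.
have Pt0 : P t0 by apply/asboolP; exists k0.
case: (@Order.TotalTheory.arg_minP _ _ _ t0 P J Pt0) => t /asboolP [K [K1 hK vK]] tmin.
have Jmin : forall k, (1 <= k)%N -> le_N k N -> Jtau w r gamma tau (v K) <= Jtau w r gamma tau (v k).
  move=> k k1 hk; have [t' ht'] := vk_Fv k1 hk.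
  rewrite vK ht'; apply: tmin; apply/asboolP; by exists k.
exists K; split => // k.
move=> /subnKC <-; elim: (k - K)%N => [|j IH] hj; first by rewrite addn0.
have hj' : le_N (K + j) N by apply: le_N_mono hj; rewrite addnS.
have k1 : (1 <= K + j.+1)%N by rewrite addnS.
have [hle heq] := part2 k1 hj.
rewrite addnS /= in hle heq hj *.
rewrite -(IH hj'); apply/heq; apply/le_anti; rewrite hle /=.
by rewrite (IH hj') Jmin.
Qed.

End Final.

Unset Implicit Arguments.
Local Close Scope classical_set_scope.

Theorem lemma5p30 (R : realType) (n : nat) (w : 'I_n -> 'I_n -> R)
  (r gamma tau M : R) (N : option nat) (v : nat -> 'I_n -> R) :
  is_graph w ->
  0 <= r <= 1 -> 0 <= gamma -> 0 < tau -> 0 <= M ->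
  VabM w r M (v 0%N) ->
  (forall k : nat, (1 <= k)%N -> le_N k N -> VabM w r M (v k)) ->
  (forall k : nat, (1 <= k)%N -> le_N k N ->
     mcOKMBO_step w r gamma tau M (v k.-1) (v k)) ->
  [/\ (forall k : nat, (1 <= k)%N -> le_N k N ->
         KM w r M (v k) /\
         (forall u, KM w r M u ->
            dJ w r gamma tau (v k.-1) (v k) <= dJ w r gamma tau (v k.-1) u)),
      (forall k : nat, (1 <= k)%N -> le_N k N ->
         Jtau w r gamma tau (v k) <= Jtau w r gamma tau (v k.-1) /\
         (Jtau w r gamma tau (v k) = Jtau w r gamma tau (v k.-1)
            <-> v k = v k.-1)) &
      exists K : nat, le_N K N /\
        forall k : nat, (K <= k)%N -> le_N k N -> v k = v K].
Proof.
move=> Hg _ _ _ _ Hv0 Hvk Hstep; split.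
- move=> k k1 hk; exact: (part1 Hg Hvk Hstep k1 hk).
- move=> k k1 hk; exact: (part2 Hg Hv0 Hvk Hstep k1 hk).
- exact: (part3 Hg Hv0 Hvk Hstep).
Qed.
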